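(* Let $(X,d)$ be a $K$-doubling metric space ($K\ge2$). Let $\mathcal F_1\subset\mathrm{Lip}(X,\mathbb{R})$ and $\mathcal F\subset\mathrm{Lip}(X,\mathbb{R}^D)$ be function spaces such that: (1) $(\mathcal F_1,\|\cdot\|_{\mathcal F_1})$ and $(\mathcal F,\|\cdot\|_{\mathcal F})$ are normed linear spaces; (2) $\|f\|_{\mathrm{Lip}}\lesssim\|f\|_{\mathcal F_1}$ for all $f\in\mathcal F_1$ and $\|v\|_{\mathrm{Lip}}\lesssim\|v\|_{\mathcal F}$ for all $v\in\mathcal F$; (3) for $f\in\mathcal F_1$ and $v,w\in\mathcal F$: $fv\in\mathcal F$ with $\|fv\|_{\mathcal F}\lesssim\|f\|_{\mathcal F_1}\|v\|_{\mathcal F}$, and $v\cdot w\in\mathcal F_1$ with $\|v\cdot w\|_{\mathcal F_1}\lesssim\|v\|_{\mathcal F}\|w\|_{\mathcal F}$; if $f\in\mathcal F_1$ and $f\ge c>0$ on $X$ then $1/f\in\mathcal F_1$ with $\|1/f\|_{\mathcal F_1}\lesssim_c\|f\|_{\mathcal F_1}$; if $v\in\mathcal F$ and $|v|\ge c>0$ on $X$ then $|v|\in\mathcal F_1$ with $\||v|\|_{\mathcal F_1}\lesssim_c\|v\|_{\mathcal F}$; (4) for every $\delta>0$ and $w\in\mathrm{Lip}(X,\mathbb{R}^D)$ with $\|w\|_{\mathrm{Lip}}\le1$ there exists $v\in\mathcal F$ with $\|v-w\|_{L^\infty}<\delta$ and $\|v\|_{\mathcal F}\lesssim_\delta\|w\|_{L^\infty}+\|w\|_{\mathrm{Lip}}$.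 Let $1\le m\le D-224K^4\log K$. If $v_1,\dots,v_m:X\to\mathbb{S}^{D-1}$ satisfy $\|v_i\|_{\mathcal F}\le1$ and $v_1(p),\dots,v_m(p)$ are orthonormal for every $p\in X$, then there exists $v_{m+1}:X\to\mathbb{S}^{D-1}$ with $\|v_{m+1}\|_{\mathcal F}\lesssim_{K,m,\mathcal F}1$ such that $v_1(p),\dots,v_{m+1}(p)$ are orthonormal for every $p\in X$.
   Context: $(X,d)$ is $K$-doubling if every ball of radius $R$ is covered by $K$ balls of radius $R/2$. $\mathrm{Lip}(X,\mathbb{R}^D)$ is the space of Lipschitz maps $X\to\mathbb{R}^D$, with $\|f\|_{\mathrm{Lip}}=\sup_{x\ne y}|f(x)-f(y)|/d(x,y)$ and $\|f\|_{L^\infty}=\sup_X|f|$. Implied constants in the hypotheses are fixed constants; the conclusion's constant depends on $K$, $m$, and those constants of $\mathcal F,\mathcal F_1$. *)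

(* Defs.v *)
From mathcomp Require Import all_boot all_order all_algebra.
From mathcomp Require Import all_classical all_reals all_analysis.
Set Implicit Arguments. Unset Strict Implicit. Unset Printing Implicit Defensive.
Import Order.TTheory GRing.Theory Num.Theory.
Local Open Scope classical_set_scope.
Local Open Scope ring_scope.

Section Defs.
Variable R : realType.

Definition edot (D : nat) (u w : 'I_D -> R) : R := \sum_(i < D) u i * w i.
Definition enorm (D : nat) (u : 'I_D -> R) : R := Num.sqrt (\sum_(i < D) u i ^+ 2).

Variable X : Type.

Definition is_metric (d : X -> X -> R) : Prop :=
  [/\ forall x y, d x y = 0 <-> x = y,
      forall x y, d x y = d y x &
      forall x y z, d x z <= d x y + d y z].

Definition doubling (d : X -> X -> R) (K : nat) : Prop :=
  forall (x : X) (r : R), 0 < r ->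
    exists c : 'I_K -> X, forall y, d x y <= r -> exists i, d (c i) y <= r / 2.

(* Lipschitz norms sup_{x<>y} |f x - f y| / d(x,y), valued in \bar R
   (+oo if not Lipschitz); the sup is taken together with 0, which changes
   nothing when X has two points and gives 0 otherwise. *)
Definition lip_norm1 (d : X -> X -> R) (f : X -> R) : \bar R :=
  ereal_sup ([set ((`|f xy.1 - f xy.2| / d xy.1 xy.2)%:E)
              | xy in [set xy : X * X | xy.1 <> xy.2]] `|` [set 0%E]).

Definition lip_norm (D : nat) (d : X -> X -> R) (v : X -> 'I_D -> R) : \bar R :=
  ereal_sup ([set ((enorm (fun i => v xy.1 i - v xy.2 i) / d xy.1 xy.2)%:E)
              | xy in [set xy : X * X | xy.1 <> xy.2]] `|` [set 0%E]).

(* sup norm sup_X |v|, valued in \bar R (+oo if unbounded; 0 on empty X). *)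
Definition linf_norm (D : nat) (v : X -> 'I_D -> R) : \bar R :=
  ereal_sup ([set ((enorm (v x))%:E) | x in [set: X]] `|` [set 0%E]).

Definition normed_subspace1 (S : set (X -> R)) (n : (X -> R) -> R) : Prop :=
  [/\ S (fun _ => 0),
      forall f g, S f -> S g -> S (fun x => f x + g x),
      forall (a : R) f, S f -> S (fun x => a * f x),
      forall f, S f -> 0 <= n f /\ (n f = 0 -> f = (fun _ => 0)) &
      (forall (a : R) f, S f -> n (fun x => a * f x) = `|a| * n f) /\
      (forall f g, S f -> S g -> n (fun x => f x + g x) <= n f + n g)].

Definition normed_subspace (D : nat) (S : set (X -> 'I_D -> R))
    (n : (X -> 'I_D -> R) -> R) : Prop :=
  [/\ S (fun _ _ => 0),
      forall v w, S v -> S w -> S (fun x i => v x i + w x i),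
      forall (a : R) v, S v -> S (fun x i => a * v x i),
      forall v, S v -> 0 <= n v /\ (n v = 0 -> v = (fun _ _ => 0)) &
      (forall (a : R) v, S v -> n (fun x i => a * v x i) = `|a| * n v) /\
      (forall v w, S v -> S w -> n (fun x i => v x i + w x i) <= n v + n w)].
End Defs.

(* Main.v *)
Require Import Defs.
From mathcomp Require Import all_boot all_order all_algebra finmap.
From mathcomp Require Import all_classical all_reals all_analysis.
From mathcomp Require Import ring lra.
Import Order.TTheory GRing.Theory Num.Theory.
Local Open Scope classical_set_scope.
Local Open Scope ring_scope.

Set Implicit Arguments. Unset Strict Implicit. Unset Printing Implicit Defensive.


Section VecAlg.
Variables (R : realType) (D : nat).
Implicit Types (u v w : 'I_D -> R).

Lemma edotC u w : edot u w = edot w u.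
Proof. by apply: eq_bigr => i _; rewrite mulrC. Qed.

Lemma edotDl u v w : edot (fun i => u i + v i) w = edot u w + edot v w.
Proof. by rewrite /edot -big_split; apply: eq_bigr => i _; rewrite mulrDl. Qed.

Lemma edotBl u v w : edot (fun i => u i - v i) w = edot u w - edot v w.
Proof.
rewrite /edot -sumrB; apply: eq_bigr => i _; by rewrite mulrBl.
Qed.

Lemma edotZl a u w : edot (fun i => a * u i) w = a * edot u w.
Proof. by rewrite /edot mulr_sumr; apply: eq_bigr => i _; rewrite mulrA. Qed.

Lemma edotDr u v w : edot w (fun i => u i + v i) = edot w u + edot w v.
Proof. by rewrite edotC edotDl !(edotC w). Qed.

Lemma edotZr a u w : edot w (fun i => a * u i) = a * edot w u.
Proof. by rewrite edotC edotZl edotC. Qed.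

Lemma edotBr u v w : edot w (fun i => u i - v i) = edot w u - edot w v.
Proof. by rewrite edotC edotBl !(edotC w). Qed.

Lemma edot_suml (I : Type) (s : seq I) (F : I -> 'I_D -> R) w :
  edot (fun i => \sum_(y <- s) F y i) w = \sum_(y <- s) edot (F y) w.
Proof.
rewrite /edot (exchange_big).
by apply: eq_bigr => i _; rewrite mulr_suml.
Qed.

Lemma edot_sumr (I : Type) (s : seq I) (F : I -> 'I_D -> R) w :
  edot w (fun i => \sum_(y <- s) F y i) = \sum_(y <- s) edot w (F y).
Proof.
rewrite edotC edot_suml; apply: eq_bigr => y _; by rewrite edotC.
Qed.

Lemma edot_ge0 u : 0 <= edot u u.
Proof. by apply: sumr_ge0 => i _; rewrite -expr2 sqr_ge0. Qed.

Lemma enormE u : enorm u = Num.sqrt (edot u u).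
Proof. by rewrite /enorm /edot; congr Num.sqrt; apply: eq_bigr => i _; rewrite expr2. Qed.

Lemma enorm_ge0 u : 0 <= enorm u.
Proof. by rewrite enormE sqrtr_ge0. Qed.

Lemma enorm_sqr u : enorm u ^+ 2 = edot u u.
Proof. by rewrite enormE sqr_sqrtr // edot_ge0. Qed.

Lemma edot0_vec u : edot u u = 0 -> forall i, u i = 0.
Proof.
move=> h i.
have ge : forall j, xpredT j -> 0 <= u j * u j by move=> j _; rewrite -expr2 sqr_ge0.
have := @psumr_eq0P _ _ xpredT (fun i => u i * u i) ge h i isT.
by move/eqP; rewrite mulf_eq0 orbb => /eqP.
Qed.

Lemma edot0l w : edot (fun _ => 0) w = 0.
Proof. by rewrite /edot big1 // => i _; rewrite mul0r. Qed.

Lemma CS2 u w : edot u w ^+ 2 <= edot u u * edot w w.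
Proof.
have [h0|hpos] := eqVneq (edot u u) 0.
  have u0 := @edot0_vec u h0.
  have -> : edot u w = 0 by rewrite /edot big1 // => i _; rewrite u0 mul0r.
  by rewrite h0 expr0n /= mul0r.
have Apos : 0 < edot u u by rewrite lt_def hpos edot_ge0.
set A := edot u u; set B := edot u w; set C := edot w w.
pose t := - B / A.
have := edot_ge0 (fun i => t * u i + w i).
rewrite edotDl !edotZl edotDr edotZr edotDr edotZr -/A -/B -/C.
rewrite (edotC w u) -/B => h.
have e : t * (t * A + B) + (t * B + C) = C - B ^+ 2 / A.
  rewrite /t; field; by rewrite lt0r_neq0.
rewrite e subr_ge0 ler_pdivrMr // in h.
by rewrite mulrC.
Qed.

Lemma CS u w : `|edot u w| <= enorm u * enorm w.
Proof.
rewrite !enormE -sqrtrM ?edot_ge0 // -sqrtr_sqr ler_sqrt ?mulr_ge0 ?edot_ge0 //.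
exact: CS2.
Qed.

Lemma enorm_le u w : edot u u <= edot w w -> enorm u <= enorm w.
Proof. by move=> h; rewrite !enormE ler_sqrt // edot_ge0. Qed.

Lemma enormD u w : enorm (fun i => u i + w i) <= enorm u + enorm w.
Proof.
rewrite enormE -(@ger0_norm _ (enorm u + enorm w)); last by rewrite addr_ge0 ?enorm_ge0.
rewrite -sqrtr_sqr ler_sqrt ?sqr_ge0 //.
rewrite edotDl !edotDr (edotC w u) sqrrD !enorm_sqr.
have := CS u w; have := ler_norm (edot u w).
set e := edot u w; set nu := enorm u; set nw := enorm w => h1 h2.
have : e <= nu * nw by apply: le_trans h2.
move=> h3. lra.
Qed.

Lemma enormZ a u : enorm (fun i => a * u i) = `|a| * enorm u.
Proof.
rewrite !enormE edotZl edotZr mulrA -expr2 sqrtrM ?sqr_ge0 //.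
by rewrite sqrtr_sqr.
Qed.

Lemma enorm0 : enorm (fun _ : 'I_D => 0 : R) = 0.
Proof. by rewrite enormE edot0l sqrtr0. Qed.

Lemma enormB u w : enorm (fun i => u i - w i) <= enorm u + enorm w.
Proof.
have := enormD u (fun i => -1 * w i).
have -> : enorm (fun i => -1 * w i) = enorm w by rewrite enormZ normrN normr1 mul1r.
by under eq_fun do rewrite mulN1r.
Qed.

Lemma enormBC u w : enorm (fun i => u i - w i) = enorm (fun i => w i - u i).
Proof.
have -> : (fun i => u i - w i) = (fun i => -1 * (w i - u i)).
  by apply: funext => i; rewrite mulN1r opprB.
by rewrite enormZ normrN normr1 mul1r.
Qed.

Lemma enorm_rev u w : enorm u - enorm w <= enorm (fun i => u i - w i).
Proof.
have := enormD (fun i => u i - w i) w.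
have -> : (fun i => u i - w i + w i) = u by apply: funext => i; rewrite subrK.
lra.
Qed.

Lemma enorm_sum (I : Type) (s : seq I) (F : I -> 'I_D -> R) :
  enorm (fun i => \sum_(y <- s) F y i) <= \sum_(y <- s) enorm (F y).
Proof.
elim: s => [|y s IH].
  rewrite big_nil.
  have -> : (fun i : 'I_D => \sum_(y <- [::]) F y i) = (fun _ => 0).
    by apply: funext => i; rewrite big_nil.
  by rewrite enorm0.
rewrite big_cons.
have -> : (fun i => \sum_(j <- y :: s) F j i) = (fun i => F y i + \sum_(j <- s) F j i).
  by apply: funext => i; rewrite big_cons.
apply: le_trans (enormD _ _) _; exact: lerD.
Qed.

End VecAlg.


Lemma ker_exists (R : realType) (D : nat) (s : seq ('I_D -> R)) :
  (size s < D)%N ->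
  exists u : 'I_D -> R, edot u u = 1 /\
    forall k, (k < size s)%N -> edot (nth (fun _ => 0) s k) u = 0.
Proof.
move=> hs.
pose A : 'M[R]_(size s, D) := \matrix_(i, j) nth (fun _ => 0) s i j.
pose B := kermx A^T.
have rB : (0 < \rank B)%N.
  rewrite /B mxrank_ker mxrank_tr subn_gt0.
  by apply: leq_ltn_trans (rank_leq_row A) hs.
have [l hl] : exists l, row l B != 0.
  apply: contrapT => h.
  have B0 : B = 0.
    apply/row_matrixP => i; rewrite row0.
    by case: (eqVneq (row i B) 0) => // hi; exfalso; apply: h; exists i.
  by move: rB; rewrite B0 mxrank0.
pose x := fun j : 'I_D => row l B 0 j.
have xA : forall i : 'I_(size s), edot (nth (fun _ => 0) s i) x = 0.
  move=> i.
  have : (row l B *m A^T) 0 i = 0.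
    by rewrite -row_mul /B mulmx_ker row0 mxE.
  rewrite mxE => h; rewrite -[X in _ = X]h /edot; apply: eq_bigr => j _.
  by rewrite [A^T j i]mxE [A i j]mxE mulrC.
have xpos : 0 < edot x x.
  rewrite lt_def edot_ge0 andbT; apply/negP => /eqP /edot0_vec h.
  move/negP: hl; apply; apply/eqP/matrixP => i j.
  by rewrite (ord1 i) [RHS]mxE; exact: h.
pose c := (Num.sqrt (edot x x))^-1.
exists (fun j => c * x j); split.
  rewrite edotZl edotZr mulrA /c -expr2 exprVn sqr_sqrtr ?edot_ge0 //.
  by rewrite mulVf // gt_eqF.
move=> k hk; rewrite edotZr.
by have := xA (Ordinal hk) => /= ->; rewrite mulr0.
Qed.


Section Geo.
Variables (R : realType) (X : choiceType) (d : X -> X -> R) (K : nat).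
Hypothesis hd : is_metric d.
Hypothesis hdb : doubling d K.

Lemma d0 x : d x x = 0. Proof. by case: hd => h _ _; apply/h. Qed.
Lemma dC x y : d x y = d y x. Proof. by case: hd. Qed.
Lemma dtri x y z : d x z <= d x y + d y z. Proof. by case: hd. Qed.
Lemma d_ge0 x y : 0 <= d x y.
Proof. have := dtri x y x; rewrite d0 (dC y x) => h; lra. Qed.
Lemma d_gt0 x y : x <> y -> 0 < d x y.
Proof.
move=> nxy; rewrite lt_def d_ge0 andbT; apply/eqP => h.
by apply: nxy; case: hd => e _ _; apply/e.
Qed.

Lemma cover k x (rho : R) : 0 < rho ->
  exists (T : finType) (c : T -> X), #|T| = (K ^ k)%N /\
    forall y, d x y <= rho -> exists t, d (c t) y <= rho / 2 ^+ k.
Proof.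
move=> rp; elim: k => [|k [T [c [cT hc]]]].
  exists unit, (fun _ => x); split; first by rewrite card_unit.
  by move=> y hy; exists tt; rewrite expr0 divr1.
have rk : 0 < rho / 2 ^+ k by rewrite divr_gt0 // exprn_gt0.
have [f hf] := choice (fun t => @hdb (c t) (rho / 2 ^+ k) rk).
exists (T * 'I_K)%type, (fun p => f p.1 p.2); split.
  by rewrite card_prod cT card_ord expnSr.
move=> y /hc [t ht]; have [i hi] := hf t y ht; exists (t, i) => /=.
by rewrite exprSr invfM mulrA.
Qed.

Definition sep (S : set X) (r : R) :=
  forall x y, S x -> S y -> x <> y -> r < d x y.

Lemma count_ball (S : set X) (r : R) (p : X) (A : set X) :
  0 < r -> sep S r -> A `<=` S `&` [set y | d p y <= 4 * r] ->
  finite_set A /\ (size (fset_set A) <= K ^ 4)%N.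
Proof.
move=> rp hS hA.
have [T [c [cT hc]]] := @cover 4 p (4 * r) (mulr_gt0 (ltr0Sn _ 3) rp).
have e4 : 4 * r / 2 ^+ 4 = r / 4 by field.
have hg : forall y, exists t, d p y <= 4 * r -> d (c t) y <= r / 4.
  move=> y; case: (pselect (d p y <= 4 * r)) => h.
    by have [t ht] := hc y h; exists t; rewrite -e4.
  have hp : d p p <= 4 * r by rewrite d0 mulr_ge0 // ltW.
  have [t _] := hc p hp.
  by exists t.
have [g hg'] := choice hg.
have ginj : forall y y', A y -> A y' -> g y = g y' -> y = y'.
  move=> y y' Ay Ay' e; apply: contrapT => ne.
  have [Sy py] := hA y Ay; have [Sy' py'] := hA y' Ay'.
  have := hS y y' Sy Sy' ne.
  have h1 := hg' y py; have h2 := hg' y' py'; rewrite e in h1.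
  have := dtri y (c (g y')) y'; rewrite dC in h1 => h3.
  lra.
have fA : finite_set A.
  pose h t := if pselect (exists y, A y /\ g y = t) is left e
              then projT1 (cid e) else p.
  apply: (sub_finite_set (B := h @` setT)); last exact: finite_image finite_finset.
  move=> y Ay; exists (g y) => //; rewrite /h.
  case: pselect => [e|]; last by move=> nn; exfalso; apply: nn; exists y.
  by case: cid => y' [Ay' ey'] /=; apply: ginj.
split => //.
have su : uniq (fset_set A : seq X) by exact: fset_uniq.
rewrite -(size_map g).
have -> : (K ^ 4)%N = size (enum T) by rewrite -cardE cT.
apply: uniq_leq_size; last by move=> t _; rewrite mem_enum.
rewrite map_inj_in_uniq // => y y' hy hy'.
apply: ginj; by move: hy hy'; rewrite !in_fset_set // !inE.
Qed.

End Geo.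


Section Zorn.
Variables (R : realType) (X : choiceType) (d : X -> X -> R) (K : nat).
Hypothesis hd : is_metric d.
Hypothesis hdb : doubling d K.
Variables (m D : nat) (vs : 'I_m -> X -> 'I_D -> R) (r : R).
Hypothesis rp : 0 < r.
Hypothesis hmD : (m + K ^ 4 < D)%N.

Definition valid (S : set X) (u : X -> 'I_D -> R) :=
  [/\ sep d S r,
      forall x, S x -> edot (u x) (u x) = 1,
      forall x i, S x -> edot (vs i x) (u x) = 0 &
      forall x y, S x -> S y -> x <> y -> d x y <= 4 * r -> edot (u x) (u y) = 0].

Lemma extend (S : set X) (u : X -> 'I_D -> R) (p : X) :
  valid S u -> (forall x, S x -> r < d x p) ->
  exists u', valid (S `|` [set p]) u' /\ forall x, S x -> u' x = u x.
Proof.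
move=> [hs hu hv ho] far.
have pS : ~ S p.
  move=> Sp; have := far p Sp; rewrite (d0 hd) => h.
  by have := lt_trans rp h; rewrite ltxx.
have [fA sA] := @count_ball R X d K hd hdb S r p (S `&` [set y | d p y <= 4 * r]) rp hs (fun x h => h).
set s := fset_set _ in sA.
pose L := [seq vs i p | i <- fintype.enum 'I_m] ++ [seq u y | y <- (s : seq X)].
have sL : (size L < D)%N.
  rewrite /L size_cat (size_map _ (fintype.enum 'I_m)) size_enum_ord size_map.
  by apply: leq_ltn_trans hmD; rewrite leq_add2l.
have [u0 [u01 u0o]] := @ker_exists _ _ L sL.
have u0v : forall i, edot (vs i p) u0 = 0.
  move=> i; have hi : (i < size L)%N.
    by rewrite /L size_cat (size_map _ (fintype.enum 'I_m)) size_enum_ord ltn_addr.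
  have := u0o _ hi; rewrite /L nth_cat (size_map _ (fintype.enum 'I_m)) size_enum_ord ltn_ord.
  by rewrite (nth_map i) ?size_enum_ord // nth_ord_enum.
have u0n : forall y, S y -> d p y <= 4 * r -> edot (u y) u0 = 0.
  move=> y Sy py.
  have ys : y \in (s : seq X) by rewrite in_fset_set // inE.
  have hi : (m + index y s < size L)%N.
    by rewrite /L size_cat (size_map _ (fintype.enum 'I_m)) size_enum_ord size_map ltn_add2l index_mem.
  have := u0o _ hi; rewrite /L nth_cat (size_map _ (fintype.enum 'I_m)) size_enum_ord.
  rewrite ltnNge leq_addr /= addKn.
  by rewrite (nth_map y) ?index_mem // nth_index.
exists (fun x => if x == p then u0 else u x); split; last first.
  by move=> x Sx; case: eqP => // e; subst x.
split.
- move=> x y [Sx|->] [Sy|->] nxy.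
  + by rewrite hs.
  + exact: far.
  + by rewrite (dC hd); apply: far.
  + by exfalso; apply: nxy.
- move=> x [Sx|->]; last by rewrite eqxx.
  by case: eqP => e; [subst x; exfalso; apply: pS| exact: hu].
- move=> x i [Sx|->]; last by rewrite eqxx.
  by case: eqP => e; [subst x; exfalso; apply: pS| exact: hv].
- move=> x y [Sx|->] [Sy|->] nxy hxy.
  + case: eqP => e; first by subst x.
    case: eqP => e'; first by subst y.
    exact: ho.
  + rewrite eqxx; case: eqP => e; first by subst x.
    by apply: u0n => //; rewrite (dC hd).
  + rewrite eqxx; case: eqP => e; first by subst y.
    by rewrite edotC; apply: u0n.
  + by exfalso; apply: nxy.
Qed.

Lemma net_exists : exists S u, valid S u /\ forall p, exists x, S x /\ d x p <= r.
Proof.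
pose T := {su : set X * (X -> 'I_D -> R) | valid su.1 su.2}.
have v0 : valid set0 (fun _ _ => 0) by split.
pose t0 : T := exist _ (set0, fun _ _ => 0) v0.
pose Rl (a b : T) := `[< (sval a).1 `<=` (sval b).1 /\
     forall x, (sval a).1 x -> (sval a).2 x = (sval b).2 x >].
have Rrefl : forall a, Rl a a by move=> a; apply/asboolP; split.
have Rtrans : forall a b c, Rl a b -> Rl b c -> Rl a c.
  move=> a b c /asboolP [h1 h2] /asboolP [h3 h4]; apply/asboolP; split.
    by move=> x /h1 /h3.
  by move=> x ax; rewrite h2 // h4 //; apply: h1.
have chain : forall A, total_on A (fun x y => Rl x y) ->
    exists t, forall s, A s -> Rl s t.
  move=> A tot.
  pose Ss x := exists a, A a /\ (sval a).1 x.
  pose us x := if pselect (Ss x) is left e then (sval (projT1 (cid e))).2 x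
               else (fun _ => 0).
  have agree : forall a x, A a -> (sval a).1 x -> us x = (sval a).2 x.
    move=> a x Aa ax; rewrite /us; case: pselect => [e|]; last first.
      by move=> nn; exfalso; apply: nn; exists a.
    case: cid => b [Ab bx] /=.
    by case: (tot a b Aa Ab) => /asboolP [h1 h2]; [rewrite h2 | rewrite -h2].
  have big2 : forall a b, A a -> A b -> exists c, [/\ A c,
      (sval a).1 `<=` (sval c).1 & (sval b).1 `<=` (sval c).1].
    move=> a b Aa Ab; case: (tot a b Aa Ab) => /asboolP [h1 _].
      by exists b; split.
    by exists a; split.
  have vs' : valid Ss us.
    split.
    - move=> x y [a [Aa ax]] [b [Ab bx]] nxy.
      have [c [Ac hac hbc]] := big2 a b Aa Ab.
      by case: (svalP c) => hc _ _ _; apply: hc => //; [apply: hac| apply: hbc].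
    - move=> x [a [Aa ax]]; rewrite (agree a) //.
      by case: (svalP a) => _ h _ _; apply: h.
    - move=> x i [a [Aa ax]]; rewrite (agree a) //.
      by case: (svalP a) => _ _ h _; apply: h.
    - move=> x y [a [Aa ax]] [b [Ab bx]] nxy hxy.
      have [c [Ac hac hbc]] := big2 a b Aa Ab.
      rewrite (agree c) ?(agree c y) //; try by [apply: hac| apply: hbc].
      by case: (svalP c) => _ _ _ h; apply: h => //; [apply: hac| apply: hbc].
  exists (exist _ (Ss, us) vs') => a Aa; apply/asboolP; split => /=.
    by move=> x ax; exists a.
  by move=> x ax; rewrite (agree a).
have [[[S u] vSu] hmax] := ZL_preorder t0 Rrefl Rtrans chain.
exists S, u; split => // p.
apply: contrapT => np.
have far : forall x, S x -> r < d x p.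
  move=> x Sx; rewrite ltNge; apply/negP => h; apply: np; by exists x.
have [u' [vu' eu']] := extend vSu far.
have := hmax (exist _ (S `|` [set p], u') vu').
move=> /(_ _) h.
have : Rl (exist _ (S `|` [set p], u') vu') (exist _ (S, u) vSu).
  apply: h; apply/asboolP; split => /=; first by move=> x Sx; left.
  by move=> x Sx; rewrite eu'.
move=> /asboolP [/= hsub _].
have Sp : S p by apply: hsub; right.
by have := far p Sp; rewrite (d0 hd) => h0; have := lt_trans rp h0; rewrite ltxx.
Qed.

End Zorn.


Lemma sum_le_size (R : realType) (I : eqType) (s : seq I) (F : I -> R) (c : R) :
  (forall y, y \in s -> F y <= c) -> \sum_(y <- s) F y <= (size s)%:R * c.
Proof.
elim: s => [|y s IH] h; first by rewrite big_nil mul0r.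
rewrite big_cons /= -addn1 natrD mulrDl mul1r addrC.
apply: lerD; first by apply: IH => z hz; apply: h; rewrite inE hz orbT.
by apply: h; rewrite inE eqxx.
Qed.

Lemma maxr_lip (R : realType) (a b : R) :
  `|Num.max 0 a - Num.max 0 b| <= `|a - b|.
Proof.
have h1 := ler_norm (a - b); have h2 := ler_norm (b - a).
rewrite distrC in h2.
rewrite ler_norml; apply/andP; split; case: (leP 0 a) => ha; case: (leP 0 b) => hb; lra.
Qed.

Section W.
Variables (R : realType) (X : choiceType) (d : X -> X -> R) (K : nat).
Hypothesis hd : is_metric d.
Hypothesis hdb : doubling d K.
Variables (m D : nat) (vs : 'I_m -> X -> 'I_D -> R) (r L : R).
Hypothesis rp : 0 < r.
Hypothesis L0 : 0 <= L.
Hypothesis hL : forall i x y, enorm (fun k => vs i x k - vs i y k) <= L * d x y.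
Variables (S : set X) (u : X -> 'I_D -> R).
Hypothesis vSu : valid d vs r S u.
Hypothesis hnet : forall p, exists x, S x /\ d x p <= r.

Definition psi y p := Num.max 0 (2 - d y p / r).
Definition Bp p := S `&` [set y | d p y <= 4 * r].
Definition w0 p := fun k => \sum_(y <- fset_set (Bp p)) psi y p * u y k.
Let N := (K ^ 4)%N.

Lemma psi_ge0 y p : 0 <= psi y p.
Proof. by rewrite /psi le_max lexx. Qed.

Lemma psi_le2 y p : psi y p <= 2.
Proof.
rewrite /psi.
have : 0 <= d y p / r by rewrite divr_ge0 // ?d_ge0 // ltW.
case: (leP 0 (2 - d y p / r)) => h; lra.
Qed.

Lemma psi0 y p : 2 * r <= d y p -> psi y p = 0.
Proof.
move=> h; rewrite /psi.
have : 2 <= d y p / r by rewrite ler_pdivlMr.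
case: (leP 0 (2 - d y p / r)) => h'; lra.
Qed.

Lemma psi_ne0 y p : psi y p != 0 -> d y p < 2 * r.
Proof.
move=> h; rewrite ltNge; apply/negP => h'; by rewrite psi0 // eqxx in h.
Qed.

Lemma psi_ge1 y p : d y p <= r -> 1 <= psi y p.
Proof.
move=> h; rewrite /psi.
have : d y p / r <= 1 by rewrite ler_pdivrMr // mul1r.
case: (leP 0 (2 - d y p / r)) => h'; lra.
Qed.

Lemma psi_lip y p q : `|psi y p - psi y q| <= d p q / r.
Proof.
apply: le_trans (maxr_lip _ _) _.
have -> : 2 - d y p / r - (2 - d y q / r) = (d y q - d y p) / r.
  by field; rewrite gt_eqF.
rewrite normrM (@gtr0_norm _ r^-1) ?invr_gt0 // ler_pM2r ?invr_gt0 //.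
rewrite ler_norml; apply/andP; split.
  have := dtri hd y q p; rewrite (dC hd q p); lra.
have := dtri hd y p q; lra.
Qed.

Lemma Bp_count p (P : set X) : P `<=` Bp p ->
  finite_set P /\ (size (fset_set P) <= N)%N.
Proof.
move=> hP; apply: (count_ball hd hdb rp (S := S) (p := p)) => //; by case: vSu.
Qed.

Lemma unit_u y : S y -> enorm (u y) = 1.
Proof. by case: vSu => _ h _ _ Sy; rewrite enormE h // sqrtr1. Qed.

Lemma in_Bp p y : y \in (fset_set (Bp p) : seq X) -> Bp p y.
Proof.
have [fB _] := @Bp_count p (Bp p) (fun _ h => h).
by rewrite in_fset_set // inE.
Qed.

Lemma w0_restrict p (P : set X) k : P `<=` Bp p ->
  (forall y, Bp p y -> ~ P y -> psi y p = 0) ->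
  w0 p k = \sum_(y <- fset_set P) psi y p * u y k.
Proof.
move=> hP h0.
have [fB _] := @Bp_count p (Bp p) (fun _ h => h).
have [fP _] := @Bp_count p P hP.
rewrite /w0 -!fsbig_finite //.
apply/esym/fsbig_widen => // y [By nPy] /=.
by rewrite h0 // mul0r.
Qed.

Lemma w0_norm2 p : edot (w0 p) (w0 p) = \sum_(y <- fset_set (Bp p)) psi y p ^+ 2.
Proof.
rewrite /w0 edot_suml; apply: eq_big_seq => y ys.
rewrite edotZl edot_sumr.
have [->|hy] := eqVneq (psi y p) 0; first by rewrite !mul0r expr2 mul0r.
rewrite expr2; congr (_ * _).
rewrite (bigD1_seq y) ?fset_uniq //= edotZr.
have [_ h1 _ ho] := vSu.
have [Sy _] := in_Bp ys.
rewrite h1 // mulr1 big1_seq ?addr0 // => y' /andP [ny' y's].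
rewrite edotZr.
have [->|hy'] := eqVneq (psi y' p) 0; first by rewrite mul0r.
have [Sy' _] := in_Bp y's.
rewrite ho ?mulr0 //; first by move=> e; rewrite e eqxx in ny'.
have h2 := psi_ne0 hy; have h3 := psi_ne0 hy'.
have := dtri hd y p y'; rewrite (dC hd p y'); lra.
Qed.

Lemma w0_norm2_ge1 p : 1 <= edot (w0 p) (w0 p).
Proof.
rewrite w0_norm2.
have [x [Sx hx]] := hnet p.
have fB := (@Bp_count p (Bp p) (fun _ h => h)).1.
have xs : x \in (fset_set (Bp p) : seq X).
  rewrite in_fset_set // inE; split => //=; rewrite (dC hd); have := rp; lra.
rewrite (bigD1_seq x) ?fset_uniq //=.
have h1 := psi_ge1 hx.
have : 1 <= psi x p ^+ 2.
  by rewrite expr2; have := psi_ge0 x p; nra.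
have : 0 <= \sum_(i <- fset_set (Bp p) | i != x) psi i p ^+ 2.
  by apply: sumr_ge0 => i _; exact: sqr_ge0.
lra.
Qed.

Lemma w0_bound p : enorm (w0 p) <= 2 * N%:R.
Proof.
rewrite /w0; apply: le_trans (enorm_sum _ _) _.
have [_ sB] := (@Bp_count p (Bp p) (fun _ h => h)).
apply: le_trans (sum_le_size (c := 2) _) _.
  move=> y ys; have [Sy _] := in_Bp ys.
  rewrite enormZ unit_u // mulr1 ger0_norm ?psi_ge0 //; exact: psi_le2.
by rewrite mulrC ler_wpM2l // ler_nat.
Qed.

Lemma w0_vs p i : `|edot (vs i p) (w0 p)| <= 4 * L * r * N%:R.
Proof.
rewrite /w0 edot_sumr.
apply: le_trans (ler_norm_sum _ _ _) _.
have [_ sB] := (@Bp_count p (Bp p) (fun _ h => h)).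
apply: le_trans (sum_le_size (c := 4 * L * r) _) _.
  move=> y ys; have [Sy _] := in_Bp ys.
  rewrite edotZr normrM ger0_norm ?psi_ge0 //.
  have [->|hy] := eqVneq (psi y p) 0; first by rewrite mul0r !mulr_ge0 // ltW.
  have h2 := psi_ne0 hy.
  have [_ _ hv _] := vSu.
  have e : edot (vs i p) (u y) = edot (fun k => vs i p k - vs i y k) (u y).
    by rewrite edotBl hv // subr0.
  rewrite e.
  have h3 : `|edot (fun k => vs i p k - vs i y k) (u y)| <= L * d p y.
    apply: le_trans (CS _ _) _; rewrite unit_u // mulr1; exact: hL.
  rewrite (dC hd p y) in h3.
  have h4 : L * d y p <= L * (2 * r) by rewrite ler_wpM2l // ltW.
  have h5 := psi_le2 y p; have h6 := psi_ge0 y p.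
  have h7 : 0 <= `|edot (fun k => vs i p k - vs i y k) (u y)| by [].
  have : psi y p * `|edot (fun k => vs i p k - vs i y k) (u y)| <= 2 * (L * (2 * r)).
    apply: ler_pM => //; lra.
  lra.
rewrite mulrC ler_wpM2l ?ler_nat // !mulr_ge0 // ltW //.
Qed.

Lemma w0_lip p q : enorm (fun k => w0 p k - w0 q k) <= 4 * N%:R * (d p q / r).
Proof.
have dpos : 0 <= d p q / r by rewrite divr_ge0 ?d_ge0 // ltW.
case: (leP r (d p q)) => hpq.
  apply: le_trans (enormB _ _) _.
  have := w0_bound p; have := w0_bound q.
  have : 1 <= d p q / r by rewrite ler_pdivlMr // mul1r.
  have : 0 <= N%:R :> R by [].
  nra.
pose P := Bp p `&` Bp q.
have hPp : P `<=` Bp p by move=> y [].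
have hPq : P `<=` Bp q by move=> y [].
have ep : forall k, w0 p k = \sum_(y <- fset_set P) psi y p * u y k.
  move=> k; apply: w0_restrict => // y [Sy hy] nP; apply: psi0.
  have : ~ (d q y <= 4 * r) by move=> h; apply: nP.
  move/negP; rewrite -ltNge => h.
  have := dtri hd q p y; rewrite (dC hd y p) (dC hd q p); have := rp; lra.
have eq' : forall k, w0 q k = \sum_(y <- fset_set P) psi y q * u y k.
  move=> k; apply: w0_restrict => // y [Sy hy] nP; apply: psi0.
  have : ~ (d p y <= 4 * r) by move=> h; apply: nP.
  move/negP; rewrite -ltNge => h.
  have := dtri hd p q y; rewrite (dC hd y q); have := rp; lra.
have -> : (fun k => w0 p k - w0 q k) =
    (fun k => \sum_(y <- fset_set P) (psi y p - psi y q) * u y k).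
  apply: funext => k; rewrite ep eq' -sumrB; apply: eq_bigr => y _.
  by rewrite mulrBl.
apply: le_trans (enorm_sum _ _) _.
have [fP sP] := @Bp_count p P hPp.
apply: le_trans (sum_le_size (c := d p q / r) _) _.
  move=> y ys; have [[Sy _] _] : P y by move: ys; rewrite in_fset_set // inE.
  rewrite enormZ unit_u // mulr1; exact: psi_lip.
have : (size (fset_set P))%:R <= N%:R :> R by rewrite ler_nat.
have : 0 <= N%:R :> R by [].
nra.
Qed.


End W.


Section H.
Variables (R : realType) (X : choiceType) (d : X -> X -> R) (D : nat).
Hypothesis hd : is_metric d.
Implicit Types (v : X -> 'I_D -> R).

Lemma lip_extract v (b : R) : (lip_norm d v <= b%:E)%E ->
  forall x y, enorm (fun k => v x k - v y k) <= b * d x y.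
Proof.
move=> h x y; case: (pselect (x = y)) => [<-|nxy].
  have -> : (fun k => v x k - v x k) = (fun _ => 0) by apply: funext => k; rewrite subrr.
  by rewrite enorm0 d0 // mulr0.
have dp := d_gt0 hd nxy.
have : ((enorm (fun k => v x k - v y k) / d x y)%:E <= lip_norm d v)%E.
  apply: ereal_sup_ubound; left; by exists (x, y).
move=> h1; have := le_trans h1 h; rewrite lee_fin ler_pdivrMr //.
Qed.

Lemma linf_extract v (b : R) : (linf_norm v < b%:E)%E ->
  forall x, enorm (v x) < b.
Proof.
move=> h x.
have : ((enorm (v x))%:E <= linf_norm v)%E.
  apply: ereal_sup_ubound; left; by exists x.
move=> h1; have := le_lt_trans h1 h; by rewrite lte_fin.
Qed.

Lemma lip_le v (b : R) : 0 <= b ->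
  (forall x y, enorm (fun k => v x k - v y k) <= b * d x y) ->
  (lip_norm d v <= b%:E)%E.
Proof.
move=> b0 h; apply: ge_ereal_sup => z [[[x y] /= nxy <-]|->].
  have dp := d_gt0 hd nxy.
  by rewrite lee_fin ler_pdivrMr.
by rewrite lee_fin.
Qed.

Lemma linf_le v (b : R) : 0 <= b -> (forall x, enorm (v x) <= b) ->
  (linf_norm v <= b%:E)%E.
Proof.
move=> b0 h; apply: ge_ereal_sup => z [[x _ <-]|->]; by rewrite lee_fin.
Qed.

Lemma lip_ge0 v : (0 <= lip_norm d v)%E.
Proof. by apply: ereal_sup_ubound; right. Qed.

Lemma linf_ge0 v : (0 <= linf_norm v)%E.
Proof. by apply: ereal_sup_ubound; right. Qed.

End H.

Section FS.
Variables (R : realType) (X : Type) (D : nat) (F : set (X -> 'I_D -> R))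
  (n : (X -> 'I_D -> R) -> R).
Hypothesis hF : normed_subspace F n.

Lemma n_ge0 v : F v -> 0 <= n v.
Proof. by case: hF => _ _ _ h _ Fv; case: (h v Fv). Qed.

Lemma n_zero : n (fun _ _ => 0) = 0.
Proof.
case: hF => F0 _ _ _ [hZ _].
have := hZ 0 _ F0.
have -> : (fun (x : X) (i : 'I_D) => 0 * (0 : R)) = (fun _ _ => 0).
  by apply: funext => x; apply: funext => i; rewrite mul0r.
by rewrite normr0 mul0r.
Qed.

Lemma F_sum (I : Type) (s : seq I) (g : I -> X -> 'I_D -> R) :
  (forall i, F (g i)) ->
  F (fun x k => \sum_(i <- s) g i x k) /\
  n (fun x k => \sum_(i <- s) g i x k) <= \sum_(i <- s) n (g i).
Proof.
move=> hg; elim: s => [|y s [IH1 IH2]].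
  have -> : (fun x k => \sum_(i <- [::]) g i x k) = (fun _ _ => 0).
    by apply: funext => x; apply: funext => k; rewrite big_nil.
  by rewrite n_zero big_nil; case: hF.
have -> : (fun x k => \sum_(i <- y :: s) g i x k) =
    (fun x k => g y x k + \sum_(i <- s) g i x k).
  by apply: funext => x; apply: funext => k; rewrite big_cons.
case: hF => _ hD _ _ [_ hT]; split; first exact: hD.
rewrite big_cons; apply: le_trans (hT _ _ (hg y) IH1) _.
exact: lerD.
Qed.

End FS.

Lemma n1_ge0 (R : realType) (X : Type) (F1 : set (X -> R)) n1 :
  normed_subspace1 F1 n1 -> forall f, F1 f -> 0 <= n1 f.
Proof. by case=> _ _ _ h _ f Ff; case: (h f Ff). Qed.

Lemma bound3 (R : realType) (c x y : R) : 0 <= x -> 0 <= y -> y <= 1 ->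
  c * x * y <= `|c| * x.
Proof.
move=> x0 y0 y1.
have h1 : c * x * y <= `|c| * x * y by rewrite ler_wpM2r // ler_wpM2r // ler_norm.
apply: le_trans h1 _; rewrite -[X in _ <= X]mulr1 ler_wpM2l // mulr_ge0 //.
Qed.

Lemma bound2 (R : realType) (c x x' : R) : 0 <= x -> x <= x' -> c * x <= `|c| * x'.
Proof.
move=> x0 xx; have := ler_norm c; have := normr_ge0 c.
set z := `|c|; nra.
Qed.

Unset Implicit Arguments. Set Strict Implicit. Set Printing Implicit Defensive.
Theorem theorem4p5 (R : realType) (K m : nat)
    (* the fixed implied constants of hypotheses (2)-(4) *)
    (Clip1 Clip Cmul Cdot : R) (Cinv Cabs Capp : R -> R) :
  exists C : R,
  forall (X : Type) (d : X -> X -> R) (D : nat)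
         (F1 : set (X -> R)) (n1 : (X -> R) -> R)
         (F : set (X -> 'I_D -> R)) (n : (X -> 'I_D -> R) -> R),
    is_metric d -> (2 <= K)%N -> doubling d K ->
    (* F1 subset Lip(X,R), F subset Lip(X,R^D) *)
    (forall f, F1 f -> (lip_norm1 d f < +oo)%E) ->
    (forall v, F v -> (lip_norm d v < +oo)%E) ->
    (* (1) *)
    normed_subspace1 F1 n1 -> normed_subspace F n ->
    (* (2) *)
    (forall f, F1 f -> (lip_norm1 d f <= (Clip1 * n1 f)%:E)%E) ->
    (forall v, F v -> (lip_norm d v <= (Clip * n v)%:E)%E) ->
    (* (3) *)
    (forall f v, F1 f -> F v ->
       F (fun x i => f x * v x i) /\ n (fun x i => f x * v x i) <= Cmul * n1 f * n v) ->
    (forall v w, F v -> F w ->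
       F1 (fun x => edot (v x) (w x)) /\
       n1 (fun x => edot (v x) (w x)) <= Cdot * n v * n w) ->
    (forall (c : R) f, 0 < c -> F1 f -> (forall x, c <= f x) ->
       F1 (fun x => (f x)^-1) /\ n1 (fun x => (f x)^-1) <= Cinv c * n1 f) ->
    (forall (c : R) v, 0 < c -> F v -> (forall x, c <= enorm (v x)) ->
       F1 (fun x => enorm (v x)) /\ n1 (fun x => enorm (v x)) <= Cabs c * n v) ->
    (* (4) *)
    (forall (delta : R) (w : X -> 'I_D -> R), 0 < delta -> (lip_norm d w <= 1)%E ->
       exists v, F v /\
         (linf_norm (fun x i => (v x i - w x i)%R) < delta%:E)%E /\
         ((n v)%:E <= (Capp delta)%:E * (linf_norm w + lip_norm d w))%E) ->
    (1 <= m)%N ->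
    ((m%:R : R) <= D%:R - 224 * K%:R ^+ 4 * ln (K%:R : R)) ->
    forall vs : 'I_m -> X -> 'I_D -> R,
      (forall i, F (vs i) /\ n (vs i) <= 1) ->
      (forall i x, enorm (vs i x) = 1) ->
      (forall p (i j : 'I_m), edot (vs i p) (vs j p) = (i == j)%:R) ->
      exists v : X -> 'I_D -> R,
        [/\ F v, n v <= C,
            forall p, enorm (v p) = 1 &
            forall p (i : 'I_m), edot (vs i p) (v p) = 0].
Proof.
pose Nr : R := (K ^ 4)%:R.
pose L : R := `|Clip| + 1.
pose M : R := m%:R + 1.
pose r : R := (32 * L * Nr * M)^-1.
pose a : R := r / (4 * Nr).
pose dl : R := a / (8 * M).
pose B0 : R := Num.max (Capp dl) 0 * (r / 2 + 1).
pose B1 : R := B0 * (1 + m%:R * `|Cmul| * `|Cdot|).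
pose c : R := a / 2.
exists (`|Cmul| * (`|Cinv c| * (`|Cabs c| * B1)) * B1).
move=> X0 d D F1 n1 F n hd0 hK hdb0 _ _ hF1 hF _ hlip hmul hdot hinv habs happ _ hm
  vs hvsF hvs1 hvso.
pose X : choiceType := {classic X0}.
have hd : @is_metric R X d := hd0.
have hdb : @doubling R X d K := hdb0.
have K0 : (0 < K)%N by apply: ltnW.
have Npos : 1 <= Nr by rewrite ler1n expn_gt0 K0.
have L1 : 1 <= L by rewrite /L; have := normr_ge0 Clip; lra.
have M1 : 1 <= M by rewrite /M; have := ler0n R m; lra.
have rp : 0 < r by rewrite /r invr_gt0 !mulr_gt0 //; lra.
have ap : 0 < a by rewrite /a divr_gt0 //; lra.
have dlp : 0 < dl by rewrite /dl divr_gt0 //; lra.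
have cp : 0 < c by rewrite /c divr_gt0.
have hmD : (m + K ^ 4 < D)%N.
  have ln2 : 1 / 2 <= ln (2 : R).
    have := expR_ge1Dx (- ln (2 : R)); rewrite expRN lnK ?posrE // => h.
    have e : (2 : R)^-1 = 1 / 2 by rewrite div1r.
    lra.
  have lnK2 : ln (2 : R) <= ln (K%:R : R).
    by rewrite ler_ln ?posrE ?ltr0n ?ler_nat.
  rewrite -(ltr_nat R) natrD -/Nr.
  move: hm; rewrite -natrX -/Nr => hm.
  nra.
have L0 : 0 <= L by lra.
have hL : forall i (x y : X), enorm (fun k => vs i x k - vs i y k) <= L * d x y.
  move=> i x y.
  have := @lip_extract R X d D hd (vs i) _ (hlip _ (hvsF i).1) x y.
  have n0 := n_ge0 hF (hvsF i).1; have n1' := (hvsF i).2.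
  have h1 : Clip * n (vs i) <= L.
    have := bound2 Clip n0 n1'; rewrite mulr1 /L; lra.
  move=> h2; apply: le_trans h2 _; apply: ler_wpM2r => //.
  exact: (d_ge0 hd).
have [S [u [vSu hnet]]] := @net_exists R X d K hd hdb m D vs r rp hmD.
pose W0 := @w0 R X d D r S u.
pose w := fun (x : X0) (k : 'I_D) => a * W0 x k.
have Nr0 : Nr != 0 by rewrite gt_eqF //; lra.
have ea : a * (4 * Nr) = r by rewrite /a mulfVK // mulf_neq0 // ?pnatr_eq0.
have ea' : a * (4 * Nr) / r = 1 by rewrite ea divff // gt_eqF.
have er : 4 * L * r * Nr = (8 * M)^-1.
  rewrite /r; field; apply/and3P; split; rewrite ?pnatr_eq0 -?lt0n ?K0 // gt_eqF //; lra.
have wlip : forall x y : X, enorm (fun k => w x k - w y k) <= 1 * d x y.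
  move=> x y.
  have -> : (fun k => w x k - w y k) = (fun k => a * (W0 x k - W0 y k)).
    by apply: funext => k; rewrite /w mulrBr.
  rewrite enormZ gtr0_norm //.
  have := @w0_lip R X d K hd hdb m D vs r rp S u vSu x y.
  rewrite -/W0 => h.
  apply: le_trans (ler_wpM2l (ltW ap) h) _; rewrite -/Nr.
  have -> : a * (4 * Nr * (d x y / r)) = (a * (4 * Nr) / r) * d x y.
    by field; rewrite gt_eqF.
  by rewrite ea'.
have wlow : forall x : X, a <= enorm (w x).
  move=> x; rewrite /w enormZ gtr0_norm // -[X in X <= _]mulr1 ler_pM2l //.
  have := @w0_norm2_ge1 R X d K hd hdb m D vs r rp S u vSu hnet x.
  rewrite -/W0 => h; rewrite enormE -[X in X <= _]sqrtr1 ler_sqrt //; lra.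
have wup : forall x : X, enorm (w x) <= r / 2.
  move=> x; rewrite /w enormZ gtr0_norm //.
  have := @w0_bound R X d K hd hdb m D vs r rp S u vSu x; rewrite -/W0 => h.
  apply: le_trans (ler_wpM2l (ltW ap) h) _.
  have -> : r / 2 = a * (4 * Nr) / 2 by rewrite ea.
  rewrite -/Nr; have -> : a * (4 * Nr) / 2 = a * (2 * Nr) by field.
  by [].
have wvs : forall (x : X) i, `|edot (vs i x) (w x)| <= a / (8 * M).
  move=> x i; rewrite /w edotZr normrM gtr0_norm //.
  have := @w0_vs R X d K hd hdb m D vs r L rp L0 hL S u vSu x i.
  rewrite -/W0 -/Nr er => h.
  by rewrite ler_pM2l.
have hlipw : (lip_norm d w <= 1%:E)%E.
  exact: (@lip_le R X d D hd w 1 ler01 wlip).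
have hlinfw : (linf_norm w <= (r / 2)%:E)%E.
  by apply: (@linf_le R X D w (r / 2)); [rewrite divr_ge0 // ltW|].
have [v [Fv [hvw hnv]]] := happ dl w dlp hlipw.
have vw : forall x : X, enorm (fun k => v x k - w x k) < dl.
  exact: (@linf_extract R X D (fun x k => v x k - w x k) dl hvw).
have nv0 := n_ge0 hF Fv.
have nvB0 : n v <= B0.
  have E0 : (0 <= linf_norm w + lip_norm d w)%E.
    by apply: adde_ge0; [exact: (@linf_ge0 R X D)| exact: (@lip_ge0 R X d D)].
  have E1 : (linf_norm w + lip_norm d w <= (r / 2 + 1)%:E)%E.
    by rewrite EFinD; apply: leeD.
  rewrite /B0; case: (leP (Capp dl) 0) => hc.
    have : ((Capp dl)%:E * (linf_norm w + lip_norm d w) <= 0)%E.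
      by apply: mule_le0_ge0 => //; rewrite lee_fin.
    move=> h; have := le_trans hnv h; rewrite lee_fin mul0r //.
  have : ((Capp dl)%:E * (linf_norm w + lip_norm d w) <= (Capp dl * (r / 2 + 1))%:E)%E.
    by rewrite EFinM; apply: lee_wpmul2l => //; rewrite lee_fin ltW.
  by move=> h; have := le_trans hnv h; rewrite lee_fin.
pose e := fun (i : 'I_m) (x : X0) => edot (v x) (vs i x).
pose g := fun (i : 'I_m) (x : X0) (k : 'I_D) => e i x * vs i x k.
have hg : forall i, F (g i) /\ n (g i) <= `|Cmul| * (`|Cdot| * n v).
  move=> i; have [Fvs nvs] := hvsF i.
  have nvs0 := n_ge0 hF Fvs.
  have [F1e n1e] := hdot v (vs i) Fv Fvs.
  have [Fg ng] := hmul _ _ F1e Fvs.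
  split; first exact: Fg.
  have n1e0 := n1_ge0 hF1 F1e.
  have h1 : n1 (fun x => edot (v x) (vs i x)) <= `|Cdot| * n v.
    exact: le_trans n1e (bound3 _ nv0 nvs0 nvs).
  apply: le_trans ng _; apply: le_trans (bound3 _ n1e0 nvs0 nvs) _.
  by rewrite ler_wpM2l.
pose vsum := fun (x : X0) (k : 'I_D) => \sum_(i < m) g i x k.
have [Fsum nsum] := F_sum hF (index_enum 'I_m) (fun i => (hg i).1).
have nsum' : n vsum <= m%:R * (`|Cmul| * (`|Cdot| * n v)).
  apply: le_trans nsum _.
  apply: le_trans (ler_sum _ (fun i _ => (hg i).2)) _.
  by rewrite sumr_const card_ord mulr_natl.
pose v' := fun (x : X0) (k : 'I_D) => v x k + (-1) * vsum x k.
have [Fv' nv'] : F v' /\ n v' <= B1.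
  case: hF => _ hD hZ _ [hZn hT].
  have FN : F (fun x k => (-1) * vsum x k) by apply: hZ.
  split; first exact: hD.
  apply: le_trans (hT _ _ Fv FN) _.
  rewrite hZn // normrN normr1 mul1r.
  have h1 : n v * (1 + m%:R * `|Cmul| * `|Cdot|) <= B1.
    by rewrite /B1 ler_wpM2r // addr_ge0 // !mulr_ge0.
  have e2 : n v * (1 + m%:R * `|Cmul| * `|Cdot|) =
      n v + m%:R * (`|Cmul| * (`|Cdot| * n v)) by ring.
  rewrite e2 in h1.
  have : n vsum <= m%:R * (`|Cmul| * (`|Cdot| * n v)) by exact: nsum'.
  lra.
have sdelta : forall (x : X0) j, \sum_(i < m) e i x * edot (vs j x) (vs i x) = e j x.
  move=> x j; rewrite (bigD1 j) //= hvso eqxx mulr1 big1 ?addr0 // => i nij.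
  by rewrite hvso eq_sym (negPf nij) mulr0.
have orth : forall (x : X0) j, edot (vs j x) (v' x) = 0.
  move=> x j; rewrite /v' edotDr edotZr /vsum edot_sumr.
  under eq_bigr do rewrite /g edotZr.
  by rewrite sdelta edotC /e mulN1r subrr.
have vv' : forall x : X0, edot (v' x) (v' x) = edot (v x) (v x) - \sum_(i < m) e i x ^+ 2.
  move=> x.
  have -> : edot (v' x) (v' x) = edot (v x) (v' x).
    rewrite {1}/v' edotDl edotZl /vsum edot_suml.
    rewrite big1 ?mulr0 ?addr0 // => i _.
    by rewrite /g edotZl orth mulr0.
  rewrite /v' edotDr edotZr /vsum edot_sumr mulN1r.
  congr (_ - _); apply: eq_bigr => i _.
  by rewrite /g edotZr expr2.
have dla : dl * (8 * M) = a by rewrite /dl mulfVK // gt_eqF //; lra.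
have hlow : forall x : X0, c <= enorm (v' x).
  move=> x.
  have hvl : a - dl <= enorm (v x).
    have h1 := @enorm_rev R D (w x) (fun k => w x k - v x k).
    have e1 : (fun k => w x k - (w x k - v x k)) = v x.
      by apply: funext => k; rewrite opprB addrC subrK.
    rewrite e1 in h1.
    rewrite -enormBC in h1.
    have := vw x; have := wlow x; lra.
  have he : forall i, `|e i x| <= a / (8 * M) + dl.
    move=> i; rewrite /e edotC.
    have -> : edot (vs i x) (v x) = edot (vs i x) (w x) + edot (vs i x) (fun k => v x k - w x k).
      by rewrite edotBr addrC subrK.
    apply: le_trans (ler_normD _ _) _; apply: lerD; first exact: wvs.
    apply: le_trans (CS _ _) _; rewrite hvs1 mul1r; exact: ltW (vw x).
  pose b := a / (8 * M) + dl.
  have bM : b * M = a / 4 by rewrite /b /dl; field; rewrite gt_eqF //; lra.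
  have b0 : 0 <= b by rewrite /b addr_ge0 // ?divr_ge0 // ltW //; lra.
  have hs : \sum_(i < m) e i x ^+ 2 <= m%:R * b ^+ 2.
    have : \sum_(i < m) e i x ^+ 2 <= \sum_(i < m) b ^+ 2.
      apply: ler_sum => i _; rewrite -real_normK ?num_real //.
      by rewrite lerXn2r // ?nnegrE.
    by rewrite sumr_const card_ord mulr_natl.
  have mb : m%:R * b ^+ 2 <= a ^+ 2 / 16.
    have -> : a ^+ 2 / 16 = (b * M) ^+ 2 by rewrite bM; field.
    rewrite exprMn mulrC ler_wpM2l ?sqr_ge0 //.
    have : m%:R <= M by rewrite /M; lra.
    have := M1; nra.
  have hv2 : (a - dl) ^+ 2 <= edot (v x) (v x).
    rewrite -enorm_sqr lerXn2r // ?nnegrE ?enorm_ge0 //.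
    have : dl <= a / 8.
      rewrite /dl ler_pM2l // lef_pV2 ?posrE //; lra.
    lra.
  have dl8 : dl <= a / 8.
    rewrite /dl ler_pM2l // lef_pV2 ?posrE //; lra.
  have key : c ^+ 2 <= edot (v' x) (v' x).
    rewrite vv' /c.
    have : (a - dl) ^+ 2 >= (7 / 8 * a) ^+ 2.
      rewrite lerXn2r // ?nnegrE; lra.
    nra.
  rewrite -enorm_sqr in key.
  have := enorm_ge0 (v' x); have := cp; nra.
pose f := fun x : X0 => enorm (v' x).
have [F1f n1f] := habs c v' cp Fv' hlow.
have [F1i n1i] := hinv c f cp F1f hlow.
have [Fv'' nv''] := hmul _ _ F1i Fv'.
have nv'0 := n_ge0 hF Fv'.
have n1f0 := n1_ge0 hF1 F1f.
have n1i0 := n1_ge0 hF1 F1i.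
exists (fun x k => (f x)^-1 * v' x k); split => //.
- apply: le_trans nv'' _.
  have h1 : n1 f <= `|Cabs c| * B1 := le_trans n1f (bound2 _ nv'0 nv').
  have h2 : n1 (fun x => (f x)^-1) <= `|Cinv c| * (`|Cabs c| * B1).
    exact: le_trans n1i (bound2 _ n1f0 h1).
  rewrite -mulrA -[X in _ <= X]mulrA; apply: bound2; first exact: mulr_ge0.
  by apply: ler_pM.
- move=> p; rewrite enormZ ger0_norm ?invr_ge0 ?enorm_ge0 // mulVf //.
  by rewrite gt_eqF // (lt_le_trans cp (hlow p)).
- by move=> p i; rewrite edotZr orth mulr0.
Qed.
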